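(* Let $G$ be a graph with $n$ vertices and $m$ edges, and let $r$ be an integer with $3\leq r\leq n/2$. If $G$ contains no cycle of length $r$, then \[ \mu_n(G)\leq -\frac{4m^2}{n^3}+2(r-3). \]
   Context: All graphs are finite, simple and undirected. $\mu_n(G)$ denotes the smallest eigenvalue of the adjacency matrix of $G$. *)

(* Defs.v *)
From HB Require Import structures.
From mathcomp Require Import all_boot all_order all_algebra.
From mathcomp Require Import all_classical all_reals.
Set Implicit Arguments. Unset Strict Implicit. Unset Printing Implicit Defensive.
Import Order.TTheory GRing.Theory Num.Theory.
Local Open Scope ring_scope.

Definition simple_graph (n : nat) (e : rel 'I_n) : Prop :=
  symmetric e /\ irreflexive e.

Definition num_edges (n : nat) (e : rel 'I_n) : nat :=
  #|[set p : 'I_n * 'I_n | (p.1 < p.2)%N && e p.1 p.2]|.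

Definition adjacency (R : realType) (n : nat) (e : rel 'I_n) : 'M[R]_n :=
  \matrix_(i, j) (e i j)%:R.

(* G contains a cycle of length r (as a subgraph): r distinct vertices
   v_1,...,v_r with v_1 v_2, ..., v_{r-1} v_r, v_r v_1 edges. *)
Definition has_cycle_of_length (n : nat) (e : rel 'I_n) (r : nat) : Prop :=
  exists s : seq 'I_n, [/\ size s = r, uniq s & cycle e s].

Definition is_smallest_eigenvalue (R : realType) (n : nat) (A : 'M[R]_n) (mu : R)
  : Prop :=
  eigenvalue A mu /\ (forall a : R, eigenvalue A a -> mu <= a).

(* Main.v *)
Require Import Defs.
From HB Require Import structures.
From mathcomp Require Import all_boot all_order all_algebra.
From mathcomp Require Import all_classical all_reals.
From mathcomp Require Import complex.
From mathcomp Require Import zify ring lra.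
Import Order.TTheory GRing.Theory Num.Theory.
Set Implicit Arguments. Unset Strict Implicit. Unset Printing Implicit Defensive.

Definition spath (T : Type) (e : rel T) (p : seq T) :=
  if p is x :: q then path e x q else true.

Lemma greedy (T : finType) (e : rel T) (irr : irreflexive e) (W : {set T}) k :
  (forall w, w \in W -> k < #|[set x in W | e w x]|) -> W != finset.set0 ->
  forall j, (0 < j <= k.+2) ->
  exists p, [/\ size p = j, uniq p, {subset p <= W} & spath e p].
Proof.
move=> Hdeg /set0Pn [w0 Hw0]; elim => [//|j IH] /andP [_ Hj].
case: j IH Hj => [|j] IH Hj.
  by exists [:: w0]; split => //= x; rewrite inE => /eqP ->.
have [p [sp up Wp pp]] := IH (ltnW Hj).
case: p sp up Wp pp => [//|x q] sp up Wp pp.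
set z := last x q.
have zW : z \in W by apply: Wp; rewrite /z mem_last.
pose N := [set y in W | e z y].
have [y yN yp] : exists2 y, y \in N & y \notin x :: q.
  apply/exists_inP; apply: contraT; rewrite negb_exists_in => /forall_inP H.
  have sub : N \subset [predD1 (x :: q) & z].
    apply/fintype.subsetP => y yN; rewrite inE; have := H y yN; rewrite negbK => ->.
    by rewrite andbT; apply: contraTneq yN => ->; rewrite inE irr andbF.
  have := subset_leq_card sub.
  have hc : #|x :: q| = 1 + #|[predD1 (x :: q) & z]|.
    by rewrite (cardD1 z) mem_last.
  rewrite (card_uniqP up) sp add1n in hc; case: hc => hc; rewrite -hc.
  have := Hdeg z zW; rewrite -/N => h1 h2.
  by have := leq_trans h1 h2; lia.
exists (rcons (x :: q) y); split.
- by rewrite size_rcons sp.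
- by rewrite rcons_uniq yp up.
- move=> t; rewrite mem_rcons inE => /orP [/eqP ->|tp]; last exact: Wp.
  by move: yN; rewrite inE => /andP [].
- move: pp; rewrite /= rcons_path => -> /=; by move: yN; rewrite inE => /andP [].
Qed.

Definition dg (T : finType) (e : rel T) (W : {set T}) (w : T) :=
  #|[set x in W | e w x]|.

Lemma sum_e_card (T : finType) (e : rel T) (W : {set T}) w :
  \sum_(x in W) (e x w : nat) = #|[set x in W | e x w]|.
Proof.
rewrite -sum1_card [RHS]big_mkcond [LHS]big_mkcond /=.
by apply: eq_bigr => x _; rewrite inE; case: (x \in W); case: (e x w).
Qed.

Lemma degen (T : finType) (e : rel T) (sym : symmetric e) (irr : irreflexive e) k :
  forall W : {set T},
  (exists p, [/\ size p = k.+2, uniq p, {subset p <= W} & spath e p]) \/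
  \sum_(w in W) dg e W w <= 2 * k * #|W|.
Proof.
move=> W; move: {2}#|W| (leqnn #|W|) => N; elim: N W => [|N IH] W HW.
  right; move: HW; rewrite leqn0 cards_eq0 => /eqP ->.
  by rewrite big_set0.
case: (boolP [exists w in W, dg e W w <= k]) => [/exists_inP [w wW dw]|H].
  pose W' := W :\ w.
  have cW : #|W| = #|W'|.+1 by rewrite (cardsD1 w W) wW.
  have HW1 : #|W'| <= N by move: HW; rewrite cW.
  have [[p [sp up Wp pp]]|HW'] := IH W' HW1.
    by left; exists p; split => // t /Wp; rewrite inE => /andP [_ ->].
  right.
  rewrite (bigD1 w) //=.
  have E : forall x, x \in W' -> dg e W x = dg e W' x + e x w.
    move=> x xW'; rewrite /dg (cardsD1 w [set y in W | e x y]) inE wW /= addnC.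
    congr (_ + _); apply: eq_card => y; rewrite !inE; by case: (y == w).
  have -> : \sum_(i in W | i != w) dg e W i = \sum_(i in W') (dg e W' i + e i w).
    rewrite [RHS](eq_bigl (fun i => (i \in W) && (i != w))); last first.
      by move=> i; rewrite !inE andbC.
    by apply: eq_bigr => i Hi; rewrite E // !inE andbC.
  rewrite big_split /= sum_e_card.
  have -> : #|[set x in W' | e x w]| = dg e W w.
    apply: eq_card => y; rewrite !inE sym.
    by case: (boolP (y == w)) => [/eqP ->|]; rewrite ?irr ?andbF.
  rewrite cW; lia.
have Hdeg : forall w, w \in W -> k < dg e W w.
  by move=> w wW; move/exists_inPn: H => /(_ w wW); rewrite ltnNge.
case: (eqVneq W finset.set0) => [->|W0]; first by right; rewrite big_set0.
by left; apply: (greedy irr Hdeg W0); rewrite ltnSn.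
Qed.

Lemma sum_b_card (T : finType) (W : {set T}) (P : pred T) :
  \sum_(x in W) (P x : nat) = #|[set x in W | P x]|.
Proof.
rewrite -sum1_card [RHS]big_mkcond [LHS]big_mkcond /=.
by apply: eq_bigr => x _; rewrite inE; case: (x \in W); case: (P x).
Qed.

Lemma tri_bound n (e : rel 'I_n) (sym : symmetric e) (irr : irreflexive e) r
  (hr : 3 <= r) (hnc : ~ has_cycle_of_length e r) (u : 'I_n) :
  \sum_i \sum_j (e u i * e i j * e u j) <= 2 * (r - 3) * \sum_j (e u j : nat).
Proof.
pose N := [set x | e u x].
have dN : \sum_j (e u j : nat) = #|N|.
  have -> : #|N| = #|[set x in [set: 'I_n] | e u x]| by apply: eq_card => j; rewrite !inE.
  rewrite -sum_b_card; apply: eq_bigl => j; by rewrite inE.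
have E : \sum_i \sum_j (e u i * e i j * e u j) = \sum_(i in N) dg e N i.
  rewrite [RHS]big_mkcond /=; apply: eq_bigr => i _.
  rewrite inE; case: (e u i); last by rewrite big1 // => j _; rewrite !mul0n.
  rewrite /dg -sum_b_card [RHS]big_mkcond /=; apply: eq_bigr => j _.
  by rewrite inE mul1n; case: (e u j); case: (e i j).
rewrite E dN.
have [[p [sp up Np pp]]|] := degen sym irr (r - 3) N; last by [].
exfalso; apply: hnc.
case: p sp up Np pp => [//|x q] sp up Np pp.
exists [:: u, x & q]; split.
- by move: sp => /= sp; rewrite sp; lia.
- rewrite cons_uniq up andbT; apply/negP => /Np; by rewrite inE irr.
- move: pp; rewrite /= rcons_path => -> /=.
  have : x \in N by apply: Np; rewrite inE eqxx.
  rewrite inE => ->; rewrite sym.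
  have : last x q \in N by apply: Np; exact: mem_last.
  by rewrite inE.
Qed.

Lemma sum_edges n (e : rel 'I_n) (sym : symmetric e) (irr : irreflexive e) :
  \sum_(u : 'I_n) \sum_(v : 'I_n) (e u v : nat) = 2 * num_edges e.
Proof.
have F : num_edges e = \sum_(u : 'I_n) \sum_(v : 'I_n) ((u < v) && e u v : nat).
  rewrite /num_edges -sum1_card pair_big /= big_mkcond /=.
  by apply: eq_bigr => p _; rewrite inE; case: (_ && _).
have G : \sum_(u : 'I_n) \sum_(v : 'I_n) (e u v : nat) =
   \sum_(u : 'I_n) \sum_(v : 'I_n) ((u < v) && e u v : nat) + \sum_(u : 'I_n) \sum_(v : 'I_n) ((v < u) && e u v : nat).
  rewrite -big_split /=; apply: eq_bigr => u _; rewrite -big_split /=.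
  apply: eq_bigr => v _.
  case: (ltngtP u v) => h /=; rewrite ?addn0 ?add0n //.
  by rewrite (val_inj h) irr.
have H : \sum_(u : 'I_n) \sum_(v : 'I_n) ((v < u) && e u v : nat) = \sum_(u : 'I_n) \sum_(v : 'I_n) ((u < v) && e u v : nat).
  rewrite exchange_big /=; apply: eq_bigr => u _; apply: eq_bigr => v _.
  by rewrite sym.
by rewrite G H F; lia.
Qed.

Local Open Scope ring_scope.

Lemma cs_sum (R : realFieldType) (I : finType) (F : I -> R) :
  (\sum_i F i) ^+ 2 <= #|I|%:R * \sum_i F i ^+ 2.
Proof.
set N : R := #|I|%:R; set s := \sum_i F i.
have [I0|In0] := eqVneq #|I| 0%N.
  have -> : s = 0.
    rewrite /s big_pred0 // => i; move/eqP: I0; by rewrite (cardD1 i) inE.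
  by rewrite expr0n /= mulr_ge0 // sumr_ge0 // => i _; exact: sqr_ge0.
have Npos : 0 < N by rewrite /N ltr0n lt0n.
have h : 0 <= \sum_i (N * F i - s) ^+ 2 by apply: sumr_ge0 => i _; exact: sqr_ge0.
have e : \sum_i (N * F i - s) ^+ 2 = N * (N * \sum_i F i ^+ 2 - s ^+ 2).
  rewrite (eq_bigr (fun i => N ^+ 2 * F i ^+ 2 - (2 * N * s) * F i + s ^+ 2)); last first.
    by move=> i _; ring.
  rewrite big_split sumrB /= -!mulr_sumr sumr_const -/s -/N.
  rewrite -mulr_natr -/N; ring.
by rewrite e in h; move: h; rewrite pmulr_rge0 // subr_ge0.
Qed.

Section Adj.
Variables (R : realFieldType) (n : nat) (a : 'I_n -> 'I_n -> R).
Hypothesis asym : forall i j, a i j = a j i.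

Definition deg u := \sum_v a u v.

Lemma L1 (f : 'I_n -> R) :
  \sum_u \sum_v a u v * (f u + f v) = 2 * \sum_u deg u * f u.
Proof.
have E2 : \sum_u \sum_v a u v * f v = \sum_u deg u * f u.
  rewrite exchange_big /=; apply: eq_bigr => v _.
  rewrite /deg mulr_suml; apply: eq_bigr => u _; by rewrite asym.
have E1 : \sum_u \sum_v a u v * f u = \sum_u deg u * f u.
  by apply: eq_bigr => u _; rewrite /deg mulr_suml.
rewrite -[2]/(1 + 1) mulrDl mul1r -{1}E1 -E2 -big_split /=.
by apply: eq_bigr => u _; rewrite -big_split /=; apply: eq_bigr => v _; rewrite mulrDr.
Qed.

Definition cc u w := \sum_i a u i * a i w.
Definition KK u v := \sum_i \sum_j a u i * a i j * a v j.

Lemma LW : \sum_u \sum_v a u v * KK u v = \sum_u \sum_w cc u w ^+ 2.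
Proof.
apply: eq_bigr => u _.
have R1 : \sum_w cc u w ^+ 2 = \sum_v a u v * \sum_w a v w * cc u w.
  rewrite (eq_bigr (fun w => \sum_v a u v * a v w * cc u w)); last first.
    by move=> w _; rewrite expr2 {1}/cc mulr_suml.
  rewrite exchange_big /=; apply: eq_bigr => v _; rewrite mulr_sumr.
  by apply: eq_bigr => w _; rewrite mulrA.
rewrite R1; apply: eq_bigr => v _; congr (_ * _).
rewrite /KK exchange_big /=; apply: eq_bigr => j _.
by rewrite mulrC /cc mulr_suml.
Qed.

Lemma LS : \sum_u \sum_w cc u w = \sum_u deg u ^+ 2.
Proof.
rewrite (eq_bigr (fun u => \sum_i a u i * deg i)); last first.
  move=> u _; rewrite /cc exchange_big /=; apply: eq_bigr => i _.
  by rewrite /deg mulr_sumr.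
rewrite exchange_big /=; apply: eq_bigr => i _.
rewrite expr2 /deg mulr_suml; apply: eq_bigr => u _; by rewrite asym.
Qed.

End Adj.

Unset Implicit Arguments.

Lemma final_arith (R : realFieldType) (mu rho S W D N : R) :
  mu <= 0 -> 0 <= rho -> 0 <= S -> 0 <= W -> 0 < N ->
  mu * S <= rho * S - W -> S ^+ 2 <= N ^+ 2 * W -> D ^+ 2 <= N * S ->
  (mu - rho) * N ^+ 3 <= - D ^+ 2.
Proof.
move=> mu0 rho0 S0 W0 N0 HA H8 H9.
have [S00|Spos] := eqVneq S 0.
  rewrite S00 mulr0 in H9.
  have -> : D ^+ 2 = 0 by apply/eqP; rewrite eq_le H9 sqr_ge0.
  rewrite oppr0; apply: mulr_le0_ge0; first by lra.
  by rewrite exprn_ge0 // ltW.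
have Sp : 0 < S by rewrite lt_def Spos S0.
have h0 : (mu - rho) * S <= - W by lra.
have h1 : (mu - rho) * S * N ^+ 2 <= - S ^+ 2.
  have := ler_wpM2r (exprn_ge0 2 (ltW N0)) h0.
  move=> h; apply: le_trans h _; rewrite mulNr lerN2 mulrC //.
have h2 : (mu - rho) * N ^+ 2 + S <= 0.
  have : S * ((mu - rho) * N ^+ 2 + S) <= 0.
    by move: h1; rewrite mulrDr -expr2 => h; lra.
  by rewrite pmulr_rle0.
have h3 : (mu - rho) * N ^+ 3 + N * S <= 0.
  have := ler_wpM2l (ltW N0) h2; rewrite mulr0 mulrDr => h.
  have -> : (mu - rho) * N ^+ 3 = N * ((mu - rho) * N ^+ 2) by ring.
  exact: h.
lra.
Qed.

Lemma arith2 (R : realFieldType) (mu S X W rho : R) :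
  2 * mu * S <= 2 * X - 2 * W -> X <= rho * S -> mu * S <= rho * S - W.
Proof. by move=> h1 h2; lra. Qed.

Set Implicit Arguments.

Section SpSec.
Local Open Scope sesquilinear_scope.

Lemma psd_min (R : realType) n (A : 'M[R]_n) (mu : R) :
  A^T = A -> (forall a, eigenvalue A a -> mu <= a) ->
  forall x : 'rV[R]_n, mu * (x *m x^T) 0 0 <= (x *m A *m x^T) 0 0.
Proof.
move=> Asym Hmu x.
pose f := real_complex R.
have fR : forall a : R, f a \is Num.real.
  by move=> a; apply/complex_realP; exists a.
have fC : forall a : R, (f a)^* = f a by move=> a; rewrite conj_Creal.
pose Ac := A ^ f.
have herm : Ac \is hermsymmx.
  apply: realsym_hermsym.
    apply/is_hermitianmxP; rewrite expr0 scale1r map_mx_id //.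
    by rewrite /Ac -[in LHS]Asym; apply/matrixP => i j; rewrite !mxE.
  by apply/mxOverP => i j; rewrite /Ac mxE.
have /orthomx_spectralP hA := hermitian_normalmx herm.
set P := spectralmx Ac in hA.
set D := spectral_diag Ac in hA.
have Pu : P \is unitarymx by apply: spectral_unitarymx.
have Punit : P \in unitmx by apply: unitarymx_unit.
have iP : invmx P = P^t* by apply: invmx_unitary.
pose xc := x ^ f.
have E1 : f ((x *m A *m x^T) 0 0) = (xc *m Ac *m xc^t*) 0 0.
  have H : f ((x *m A *m x^T) 0 0) = ((x *m A *m x^T) ^ f) 0 0.
    by rewrite [RHS]mxE.
  rewrite H !map_mxM.
  congr ((_ *m _) _ _); rewrite map_trmx /xc -map_mx_comp.
  by apply/matrixP => i j; rewrite !mxE /= fC.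
have E2 : f ((x *m x^T) 0 0) = (xc *m xc^t*) 0 0.
  have H : f ((x *m x^T) 0 0) = ((x *m x^T) ^ f) 0 0.
    by rewrite [RHS]mxE.
  rewrite H !map_mxM.
  congr ((_ *m _) _ _); rewrite map_trmx /xc -map_mx_comp.
  by apply/matrixP => i j; rewrite !mxE /= fC.
pose y := xc *m P^t*.
have Py : P *m xc^t* = y^t*.
  by rewrite /y trmx_mul map_mxM trmxCK.
have E3 : xc *m Ac *m xc^t* = y *m diag_mx D *m y^t*.
  by rewrite -Py /y -iP hA !mulmxA.
have E4 : xc *m xc^t* = y *m y^t*.
  by rewrite -Py /y -iP mulmxA -[_ *m invmx P *m P]mulmxA mulVmx // mulmx1.
have Deig : forall i, f mu <= D 0 i.
  move=> i.
  have /mxOverP/(_ 0 i) := hermitian_spectral_diag_real herm.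
  move=> /complex_realP [k Dk]; rewrite Dk lecR; apply: Hmu.
  rewrite -(eigenvalue_map f) -/Ac; suff HH : eigenvalue Ac (D 0 i) by move: HH; rewrite Dk.
  apply/eigenvalueP; exists (row i P).
    have PAc : P *m Ac = diag_mx D *m P.
      by rewrite hA !mulmxA mulmxV // mul1mx.
    rewrite -row_mul PAc mul_diag_mx; apply/rowP => j; rewrite !mxE.
    done.
  apply/eqP => h; move/row_unitarymxP: Pu => /(_ i i).
  by rewrite h eqxx dotmxE mul0mx mxE => /eqP; rewrite eq_sym oner_eq0.
suff H : f mu * f ((x *m x^T) 0 0) <= f ((x *m A *m x^T) 0 0) by rewrite -lecR rmorphM; exact: H.
rewrite E1 E2 E3 E4; clearbody y; rewrite mul_mx_diag !mxE mulr_sumr -subr_ge0 -sumrB.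
apply: sumr_ge0 => j _; rewrite !mxE.
rewrite mulrAC [_ * D 0 j]mulrC -mulrBl.
apply: mulr_ge0; first by rewrite subr_ge0.
exact: mul_conjC_ge0.
Qed.

End SpSec.

Unset Implicit Arguments.

Theorem corollary5 (R : realType) (n : nat) (e : rel 'I_n) (r : nat)
  (hG : simple_graph e) (hr3 : (3 <= r)%N) (hrn : (2 * r <= n)%N)
  (hnocyc : ~ has_cycle_of_length e r) (mu : R)
  (hmu : is_smallest_eigenvalue (adjacency R e) mu) :
  mu <= - (4 * (num_edges e)%:R ^+ 2) / (n%:R ^+ 3) + 2 * (r%:R - 3).
Proof.
have [sym irr] := hG.
set A := adjacency R e.
pose a (i j : 'I_n) : R := (e i j)%:R.
have Aij : forall i j, A i j = a i j by move=> i j; rewrite /A /adjacency mxE.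
have asym : forall i j, a i j = a j i by move=> i j; rewrite /a sym.
have a_ge0 : forall i j, 0 <= a i j by move=> i j; rewrite /a ler0n.
have a01 : forall i j, a i j * a i j = a i j.
  by move=> i j; rewrite /a; case: (e i j); rewrite ?mulr0 ?mulr1.
have Asym : A^T = A by apply/matrixP => i j; rewrite mxE !Aij asym.
have psd := psd_min Asym hmu.2.
have n0 : (0 < n)%N by apply: leq_trans hrn; rewrite muln_gt0 /= (leq_trans _ hr3).
pose i0 := Ordinal n0.
have mu0 : mu <= 0.
  have := psd (delta_mx 0 i0).
  by rewrite trmx_delta -rowE -colE -rowE !mxE !eqxx /= mulr1 irr.
have quad : forall f : 'I_n -> R,
    (\row_i f i *m A *m (\row_i f i)^T) 0 0 = \sum_i \sum_j f i * a i j * f j.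
  move=> f; rewrite mxE (eq_bigr (fun j => \sum_i f i * a i j * f j)); last first.
    move=> j _; rewrite !mxE mulr_suml; apply: eq_bigr => i _.
    by rewrite !mxE.
  by rewrite exchange_big.
have nrm : forall f : 'I_n -> R,
    (\row_i f i *m (\row_i f i)^T) 0 0 = \sum_i f i * f i.
  by move=> f; rewrite mxE; apply: eq_bigr => i _; rewrite !mxE.
pose d := deg a.
pose T u := \sum_i \sum_j a u i * a i j * a u j.
pose S := \sum_u d u ^+ 2.
pose W := \sum_u \sum_w cc a u w ^+ 2.
pose Nq u v := \sum_i (a u i - a v i) * (a u i - a v i).
pose Q u v := \sum_i \sum_j (a u i - a v i) * a i j * (a u j - a v j).
have HQ : forall u v, mu * Nq u v <= Q u v.
  by move=> u v; have := psd (\row_i (a u i - a v i)); rewrite quad nrm.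
have H3 : \sum_u \sum_v a u v * (mu * Nq u v) <= \sum_u \sum_v a u v * Q u v.
  apply: ler_sum => u _; apply: ler_sum => v _; exact: ler_wpM2l.
have H4 : 2 * mu * S <= \sum_u \sum_v a u v * (mu * Nq u v).
  have N1 : forall u v, Nq u v <= d u + d v.
    move=> u v; rewrite /Nq /d /deg -big_split /=; apply: ler_sum => i _.
    have := a01 u i; have := a01 v i; have := a_ge0 u i; have := a_ge0 v i.
    nra.
  have E : \sum_u \sum_v a u v * (mu * (d u + d v)) = 2 * mu * S.
    rewrite (eq_bigr (fun u => mu * \sum_v a u v * (d u + d v))); last first.
      by move=> u _; rewrite mulr_sumr; apply: eq_bigr => v _; ring.
    rewrite -mulr_sumr L1 // /S mulrCA mulrA; congr (_ * _).
  rewrite -E; apply: ler_sum => u _; apply: ler_sum => v _.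
  by apply: ler_wpM2l => //; apply: ler_wnM2l.
have EQ : forall u v, Q u v = T u + T v - KK a u v - KK a v u.
  move=> u v; rewrite /Q /T /KK.
  rewrite (eq_bigr (fun i => \sum_j a u i * a i j * a u j + \sum_j a v i * a i j * a v j
     - \sum_j a u i * a i j * a v j - \sum_j a v i * a i j * a u j)); last first.
    by move=> i _; rewrite -big_split -!sumrB; apply: eq_bigr => j _ /=; ring.
  by rewrite !sumrB big_split.
have H5 : \sum_u \sum_v a u v * Q u v = 2 * \sum_u d u * T u - 2 * W.
  rewrite (eq_bigr (fun u => \sum_v a u v * (T u + T v) - \sum_v a u v * KK a u v
     - \sum_v a u v * KK a v u)); last first.
    by move=> u _; rewrite -!sumrB; apply: eq_bigr => v _; rewrite EQ; ring.
  rewrite !sumrB L1 //.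
  have -> : \sum_u \sum_v a u v * KK a v u = \sum_u \sum_v a u v * KK a u v.
    by rewrite exchange_big /=; apply: eq_bigr => u _; apply: eq_bigr => v _; rewrite asym.
  rewrite LW //; rewrite -/W; ring.
pose rho : R := 2 * (r%:R - 3).
have rho0 : 0 <= rho.
  rewrite /rho mulr_ge0 // subr_ge0 -[3]/(3%:R) ler_nat; done.
have d0 : forall u, 0 <= d u by move=> u; apply: sumr_ge0 => v _.
have H6 : forall u, T u <= rho * d u.
  move=> u; have h := tri_bound sym irr hr3 hnocyc u.
  have ET : T u = (\sum_i \sum_j (e u i * e i j * e u j)%N)%:R.
    rewrite natr_sum; apply: eq_bigr => i _; rewrite natr_sum.
    by apply: eq_bigr => j _; rewrite !natrM.
  have Ed : d u = (\sum_j (e u j : nat))%:R by rewrite /d /deg natr_sum.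
  rewrite ET Ed; move: h; rewrite -(ler_nat R) !natrM natrB //.
have H7 : \sum_u d u * T u <= rho * S.
  rewrite /S mulr_sumr; apply: ler_sum => u _.
  have -> : rho * d u ^+ 2 = d u * (rho * d u) by ring.
  exact: ler_wpM2l.
have W0 : 0 <= W by apply: sumr_ge0 => u _; apply: sumr_ge0 => w _; exact: sqr_ge0.
have S0 : 0 <= S by apply: sumr_ge0 => u _; exact: sqr_ge0.
have H8 : S ^+ 2 <= n%:R ^+ 2 * W.
  have := cs_sum (fun p : 'I_n * 'I_n => cc a p.1 p.2).
  rewrite card_prod card_ord natrM -expr2.
  rewrite -(pair_bigA _ (fun i j => cc a i j)) -(pair_bigA _ (fun i j => cc a i j ^+ 2)).
  by rewrite LS.
pose D := \sum_u d u.
have H9 : D ^+ 2 <= n%:R * S by have := cs_sum d; rewrite card_ord.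
have H10 : D = 2 * (num_edges e)%:R.
  have := sum_edges sym irr; move/(congr1 (fun k : nat => k%:R : R)).
  rewrite natrM natr_sum => <-; rewrite /D /d /deg.
  by apply: eq_bigr => u _; rewrite natr_sum.
have HA : mu * S <= rho * S - W.
  by apply: (@arith2 _ mu S _ W rho _ H7); rewrite -H5; exact: le_trans H4 H3.
have N0 : 0 < n%:R :> R by rewrite ltr0n.
have key := @final_arith _ mu rho S W D _ mu0 rho0 S0 W0 N0 HA H8 H9.
rewrite -lerBlDr ler_pdivlMr; last by rewrite exprn_gt0.
have -> : 4 * (num_edges e)%:R ^+ 2 = D ^+ 2 :> R by rewrite H10; ring.
exact: key.
Qed.
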